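(* Let $n\ge3$ and let $G=K_{1,n-1}$ be the uniform coloured star graph on vertices $1,\dots,n$ with centre $1$ (edges $\{1,j\}$, $j=2,\dots,n$), with associated linear space $\mathcal L$. Let $E$ be its edge set and $E^c$ the set of pairs $\{i,j\}$ of distinct vertices with $i,j\ge2$. Then $r=3$, $s=4$, and the vector space of linear forms in $I(\mathcal L^{-1})$ is spanned by $x_{22}-x_{ii}$ ($i=3,\dots,n$); $x_{12}-x_{ij}$ ($\{i,j\}\in E$); $x_{23}-x_{ij}$ ($\{i,j\}\in E^c$); and $x_{11}-(n-2)\,x_{n-1,n}-x_{nn}$.
   Context: For a simple graph $G$ on $V=\{1,\dots,n\}$, its uniform coloured version has one vertex colour and one edge colour, and its associated linear space is $\mathcal L=\{\lambda_1I_n+\lambda_2A_2:\lambda_1,\lambda_2\in\mathbb C\}\subseteq\mathbb S^n$, where $A_2$ is the 0/1 adjacency matrix of $G$. The reciprocal variety $\mathcal L^{-1}$ is the Zariski closure of $\{M^{-1}:M\in\mathcal L\text{ invertible}\}$, with vanishing ideal $I(\mathcal L^{-1})\subseteq\mathbb C[x_{ij}:1\le i\le j\le n]$, using $x_{ji}=x_{ij}$. Here $r$ is the number of distinct eigenvalues of $A_2$ and $s$ is the number of orbits of the automorphism group of $G$ acting on unordered pairs $\{i,j\}$ of (not necessarily distinct) vertices via $\{i,j\}\mapsto\{\sigma(i),\sigma(j)\}$. *)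

(* Defs.v *)
From HB Require Import structures.
From mathcomp Require Import all_boot all_order fingroup perm all_algebra.
Set Implicit Arguments. Unset Strict Implicit. Unset Printing Implicit Defensive.
Import Order.TTheory GRing.Theory Num.Theory.
Local Open Scope ring_scope.

(* Vertices 1..n of the paper are the ordinals 0..n-1 of 'I_n:
   paper vertex k  <->  ordinal with value k-1. *)

Definition star_rel (n : nat) : rel 'I_n :=
  fun i j => ((val i == 0%N) && (val j != 0%N)) || ((val j == 0%N) && (val i != 0%N)).

Arguments star_rel n : clear implicits.

Definition adj_mx (C : nzRingType) (n : nat) (e : rel 'I_n) : 'M[C]_n :=
  \matrix_(i, j) (e i j)%:R.

Definition num_distinct_eigs (C : fieldType) (n : nat) (A : 'M[C]_n) (k : nat) : Prop :=
  exists s : seq C, [/\ uniq s, forall a, (a \in s) = eigenvalue A a & size s = k].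

Definition autG (n : nat) (e : rel 'I_n) : {set {perm 'I_n}} :=
  [set s : {perm 'I_n} | [forall i, forall j, e (s i) (s j) == e i j]].

Definition upairs (n : nat) : {set {set 'I_n}} :=
  [set S : {set 'I_n} | (0 < #|S| <= 2)%N].

Definition pair_orbit (n : nat) (e : rel 'I_n) (S : {set 'I_n}) : {set {set 'I_n}} :=
  [set [set (s : {perm 'I_n}) x | x in S] | s in autG e].

Definition num_pair_orbits (n : nat) (e : rel 'I_n) : nat :=
  #|[set pair_orbit e S | S in upairs n]|.

Definition inL (C : nzRingType) (n : nat) (A : 'M[C]_n) (M : 'M[C]_n) : Prop :=
  exists l1 l2 : C, M = l1%:M + l2 *: A.

(* variables x_ij, i <= j *)
Definition upair (n : nat) := {p : 'I_n * 'I_n | (val p.1 <= val p.2)%N}.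

(* linear forms in C[x_ij : i <= j], represented by their coefficient vectors *)
Notation linform C n := {ffun upair n -> C^o}.

(* the linear form x_ij (paper labels i, j in 1..n; x_ji = x_ij) *)
Definition xv (C : nzRingType) (n : nat) (i j : nat) : linform C n :=
  [ffun p : upair n =>
     (((val (val p).1).+1 == i) && ((val (val p).2).+1 == j)
      || ((val (val p).1).+1 == j) && ((val (val p).2).+1 == i))%:R].

Definition lin_eval (C : nzRingType) (n : nat) (c : linform C n) (X : 'M[C]_n) : C :=
  \sum_(p : upair n) c p * X (val p).1 (val p).2.

(* the linear form c lies in I(L^{-1}): it vanishes on every M^{-1}, M in L
   invertible (a polynomial vanishes on a set iff it vanishes on its
   Zariski closure) *)
Definition in_recip_ideal (C : fieldType) (n : nat) (A : 'M[C]_n) (c : linform C n) : Prop :=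
  forall M : 'M[C]_n, inL A M -> M \in unitmx -> lin_eval c (invmx M) = 0.

Definition Estar (n : nat) : seq (nat * nat) := [seq (1%N, j) | j <- iota 2 n.-1].
Definition Ecstar (n : nat) : seq (nat * nat) :=
  [seq (i, j) | i <- iota 2 n.-1, j <- iota i.+1 (n - i)].

Definition star_gens (C : fieldType) (n : nat) : seq (linform C n) :=
  [seq xv C n 2 2 - xv C n i i | i <- iota 3 (n - 2)]
  ++ [seq xv C n 1 2 - xv C n p.1 p.2 | p <- Estar n]
  ++ [seq xv C n 2 3 - xv C n p.1 p.2 | p <- Ecstar n]
  ++ [:: xv C n 1 1 - (n - 2)%:R *: xv C n n.-1 n - xv C n n n].

(* Main.v *)
Require Import Defs.
From HB Require Import structures.
From mathcomp Require Import all_boot all_order fingroup perm all_algebra.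
From mathcomp Require Import ring zify.
Import Order.TTheory GRing.Theory Num.Theory.
Local Open Scope ring_scope.

Set Implicit Arguments. Unset Strict Implicit. Unset Printing Implicit Defensive.
Lemma solve1 (C : fieldType) (l x y z : C) : l != 0 -> l * x + y = z -> x = (z - y) / l.
Proof. move=> l0 <-. by field. Qed.
Arguments solve1 {C l x y z}.

Section S.
Variable C : numClosedFieldType.
Variable m : nat.
Local Notation n := m.+3.
Local Notation A := (adj_mx C (star_rel n)).

Lemma AE (i j : 'I_n) : A i j =
  ((((i:nat) == 0%N) && ((j:nat) != 0%N)) || (((j:nat) == 0%N) && ((i:nat) != 0%N)))%:R.
Proof. by rewrite mxE. Qed.

Lemma lift0_neq (k : 'I_m.+2) : (val (lift ord0 k) == 0%N) = false.
Proof. by []. Qed.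

Lemma vA (v : 'rV[C]_n) (c : 'I_n) : (v *m A) 0 c =
  if (c:nat) == 0%N then \sum_(k < m.+2) v 0 (lift ord0 k) else v 0 ord0.
Proof.
rewrite mxE big_ord_recl AE /=.
case: eqP => Hc /=.
  rewrite mulr0 add0r; apply: eq_bigr => k _; by rewrite AE Hc /= mulr1.
rewrite mulr1 big1 ?addr0 // => k _.
by rewrite AE /=; move/eqP/negbTE: Hc => ->; rewrite mulr0.
Qed.

Lemma eqC_entry (v : 'rV[C]_n) a (c : 'I_n) : v *m A = a *: v ->
  (if (c:nat) == 0%N then \sum_(k < m.+2) v 0 (lift ord0 k) else v 0 ord0) = a * v 0 c.
Proof. by move=> H; rewrite -vA H mxE. Qed.

Lemma eigA a : eigenvalue A a = (a == 0) || (a ^+ 2 == (m.+2)%:R).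
Proof.
apply/eigenvalueP/idP.
  case=> v Hv vnz; case: eqP => //= a0.
  have E0 := eqC_entry ord0 Hv; rewrite /= in E0.
  have Ek : forall k : 'I_m.+2, v 0 ord0 = a * v 0 (lift ord0 k).
    by move=> k; have := eqC_entry (lift ord0 k) Hv.
  have H1 : a * (a * v 0 ord0) = (m.+2)%:R * v 0 ord0.
    rewrite -E0 mulr_sumr (eq_bigr (fun _ => v 0 ord0)); last by move=> k _; rewrite (Ek k).
    by rewrite sumr_const card_ord mulr_natl.
  have v0 : v 0 ord0 != 0.
    apply: contra vnz => /eqP v0; apply/eqP/rowP => j; rewrite mxE.
    case: (unliftP ord0 j) => [k ->|->] //.
    by have /eqP := Ek k; rewrite v0 eq_sym mulf_eq0 (negbTE (introN eqP a0)) /= => /eqP.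
  by rewrite mulrA -expr2 in H1; apply/eqP; apply: (mulIf v0).
case/orP => [/eqP -> | /eqP Ha].
  exists (\row_k (((k:nat) == 1%N)%:R - ((k:nat) == 2%N)%:R)); last first.
    by apply/eqP => /rowP /(_ (lift ord0 ord0)); rewrite !mxE /= subr0 => /eqP; rewrite oner_eq0.
  rewrite scale0r; apply/rowP => c; rewrite vA !mxE.
  case: eqP => Hc.
    rewrite big_ord_recl big_ord_recl !mxE /= big1 ?addr0; first by rewrite subr0 sub0r subrr.
    by move=> i _; rewrite mxE /= subrr.
    by rewrite /= subrr.
exists (\row_k (if (k:nat) == 0%N then a else 1)); last first.
  by apply/eqP => /rowP /(_ (lift ord0 ord0)); rewrite !mxE /= => /eqP; rewrite oner_eq0.
apply/rowP => c; rewrite vA !mxE.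
case: eqP => Hc.
  rewrite (eq_bigr (fun _ => 1)); last by move=> k _; rewrite mxE.
  by rewrite sumr_const card_ord -Ha expr2.
by rewrite /= mulr1.
Qed.

Lemma part1 : num_distinct_eigs A 3.
Proof.
pose r : C := sqrtC (m.+2)%:R.
have r2 : r ^+ 2 = (m.+2)%:R by rewrite sqrtCK.
have r0 : r != 0.
  by apply/eqP => r0; move: r2; rewrite r0 expr0n /= => /eqP; rewrite eq_sym pnatr_eq0.
have rr : r != - r.
  rewrite -addr_eq0 -mulr2n mulrn_eq0 /= (negbTE r0) //.
exists [:: 0; r; - r]; split => //.
  rewrite /= !inE negb_or eq_sym r0 /= eq_sym oppr_eq0 r0 /= rr //.
move=> a; rewrite eigA !inE -r2 eqf_sqr.
by [].
Qed.

Lemma YA p (Y : 'M[C]_(p, n)) r (c : 'I_n) : (Y *m A) r c =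
  if (c:nat) == 0%N then \sum_(k < m.+2) Y r (lift ord0 k) else Y r ord0.
Proof.
rewrite mxE big_ord_recl AE /=.
case: eqP => Hc /=.
  rewrite mulr0 add0r; apply: eq_bigr => k _; by rewrite AE Hc /= mulr1.
rewrite mulr1 big1 ?addr0 // => k _.
by rewrite AE /=; move/eqP/negbTE: Hc => ->; rewrite mulr0.
Qed.

Lemma AY p (Y : 'M[C]_(n, p)) (r : 'I_n) c : (A *m Y) r c =
  if (r:nat) == 0%N then \sum_(k < m.+2) Y (lift ord0 k) c else Y ord0 c.
Proof.
rewrite mxE big_ord_recl AE /=.
case: eqP => Hc /=.
  rewrite mul0r add0r; apply: eq_bigr => k _; by rewrite AE Hc /= mul1r.
rewrite mul1r big1 ?addr0 // => k _.
by rewrite AE /=; move/eqP/negbTE: Hc => ->; rewrite mul0r.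
Qed.

Local Notation o1 := (lift ord0 (ord0 : 'I_m.+2)).
Local Notation o2 := (lift ord0 (lift ord0 (ord0 : 'I_m.+1))).

Lemma inv_struct l1 l2 : (l1%:M + l2 *: A) \in unitmx ->
  let Y := invmx (l1%:M + l2 *: A) in
  exists b g d, [/\ forall c : 'I_n, (c:nat) != 0%N -> Y ord0 c = b,
    forall j : 'I_n, (j:nat) != 0%N -> Y j j = g,
    forall j c : 'I_n, (j:nat) != 0%N -> (c:nat) != 0%N -> j != c -> Y j c = d,
    Y ord0 ord0 = g + (m.+1)%:R * d &
    [/\ l2 * Y ord0 ord0 + l1 * b = 0, l2 * b + l1 * g = 1 & l2 * b + l1 * d = 0]].
Proof.
move=> Mu Y.
have HMY := mulmxV Mu; have HYM := mulVmx Mu.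
have eqMY : forall r c, l1 * Y r c + l2 * (if (r:nat) == 0%N then
    \sum_(k < m.+2) Y (lift ord0 k) c else Y ord0 c) = (r == c)%:R.
  move=> r c; rewrite -AY; have := congr1 (fun N : 'M[C]_n => N r c) HMY.
  by rewrite mulmxDl mul_scalar_mx -scalemxAl !mxE.
have eqYM : forall r c, l1 * Y r c + l2 * (if (c:nat) == 0%N then
    \sum_(k < m.+2) Y r (lift ord0 k) else Y r ord0) = (r == c)%:R.
  move=> r c; rewrite -YA; have := congr1 (fun N : 'M[C]_n => N r c) HYM.
  by rewrite mulmxDr mul_mx_scalar -scalemxAr !mxE.
have l10 : l1 != 0.
  apply/eqP => l10; have := eqMY o1 o1; have := eqMY o2 o1.
  rewrite l10 !mul0r !add0r /= => -> /eqP; by rewrite eq_sym oner_eq0.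
have ne0 : forall c : 'I_n, (c:nat) != 0%N -> (ord0 == c) = false.
  by move=> c Hc; apply/eqP => E; rewrite -E in Hc.
pose b := (0 - l2 * Y ord0 ord0) / l1.
have Hb : forall c : 'I_n, (c:nat) != 0%N -> Y ord0 c = b.
  move=> c Hc; apply: solve1 l10 _; have := eqYM ord0 c.
  by rewrite (negbTE Hc) ne0.
pose g := (1 - l2 * b) / l1.
have Hg : forall j : 'I_n, (j:nat) != 0%N -> Y j j = g.
  move=> j Hj; apply: solve1 l10 _; have := eqMY j j.
  by rewrite (negbTE Hj) Hb // eqxx.
pose d := (0 - l2 * b) / l1.
have Hd : forall j c : 'I_n, (j:nat) != 0%N -> (c:nat) != 0%N -> j != c -> Y j c = d.
  move=> j c Hj Hc Hjc; apply: solve1 l10 _; have := eqMY j c.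
  by rewrite (negbTE Hj) Hb // (negbTE Hjc).
exists b, g, d; split => //; last first.
  have F1 : forall y : C, l2 * y + l1 * ((0 - l2 * y) / l1) = 0 by move=> y; field.
  have F2 : forall y : C, l2 * y + l1 * ((1 - l2 * y) / l1) = 1 by move=> y; field.
  by split; rewrite /b /g /d.
have := eqMY ord0 o1; rewrite /= big_ord_recl big_ord_recl /= Hg //.
rewrite (eq_bigr (fun _ => d)); last by move=> k _; rewrite Hd.
rewrite sumr_const card_ord Hb //.
have := eqMY ord0 ord0; rewrite /= (Hd o2 o1) //.
rewrite mulr_natl mulrS.
move=> E0 E1.
have Eb : l1 * b = - (l2 * Y ord0 ord0).
  have F : forall y : C, l1 * ((0 - l2 * y) / l1) = - (l2 * y) by move=> y; field.
  exact: F.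
case: (eqVneq l2 0) => [l20|l2n0].
  move: E0; rewrite l20 mul0r => /(solve1 l10) ->.
  rewrite /g /d l20 !mul0r subr0 sub0r oppr0 mul0r mul0rn !addr0.
  by [].
apply: (mulfI l2n0); move: E1; rewrite Eb => /eqP; rewrite addr_eq0 eqr_opp mulrS => /eqP ->; done.
Qed.

Local Notation lf := (linform C n).

Lemma lin_evalD (c1 c2 : lf) X : lin_eval (c1 + c2) X = lin_eval c1 X + lin_eval c2 X.
Proof. by rewrite /lin_eval -big_split; apply: eq_bigr => p _; rewrite ffunE mulrDl. Qed.

Lemma lin_evalN (c : lf) X : lin_eval (- c) X = - lin_eval c X.
Proof. by rewrite /lin_eval -sumrN; apply: eq_bigr => p _; rewrite ffunE mulNr. Qed.

Lemma lin_evalB (c1 c2 : lf) X : lin_eval (c1 - c2) X = lin_eval c1 X - lin_eval c2 X.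
Proof. by rewrite lin_evalD lin_evalN. Qed.

Lemma lin_evalZ k (c : lf) X : lin_eval (k *: c) X = k * lin_eval c X.
Proof. by rewrite /lin_eval mulr_sumr; apply: eq_bigr => p _; rewrite ffunE mulrA. Qed.

Lemma lin_eval_sum I (r : seq I) (F : I -> lf) X :
  lin_eval (\sum_(i <- r) F i) X = \sum_(i <- r) lin_eval (F i) X.
Proof.
rewrite /lin_eval exchange_big /=; apply: eq_bigr => p _.
by rewrite sum_ffunE mulr_suml.
Qed.

Lemma xv_eval (i0 j0 : 'I_n) X : (i0 <= j0)%N -> lin_eval (xv C n i0.+1 j0.+1) X = X i0 j0.
Proof.
move=> Hij; pose p0 : upair n := exist _ (i0, j0) Hij.
rewrite /lin_eval (bigD1 p0) //= big1 ?addr0; first by rewrite ffunE /= !eqxx mul1r.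
move=> q Hq; rewrite ffunE; case: q Hq => [[q1 q2] /= Hq12] Hq.
case: orP => [[/andP [/eqP E1 /eqP E2]|/andP [/eqP E1 /eqP E2]]|]; last by rewrite mul0r.
  case/eqP: Hq; apply: val_inj => /=; congr pair; apply: val_inj; by case: E1; case: E2.
case/eqP: Hq; apply: val_inj => /=; case: E1 => E1; case: E2 => E2.
have E : (i0:nat) = j0 by apply/eqP; rewrite eqn_leq Hij -E1 -E2 Hq12.
by congr pair; apply: val_inj; rewrite /= ?E1 ?E2 E.
Qed.

Lemma xv_evaln i j X : (0 < i)%N -> (i <= j)%N -> (j <= n)%N ->
  lin_eval (xv C n i j) X = X (inord i.-1) (inord j.-1).
Proof.
move=> i0 ij jn.
have j0 : (0 < j)%N by apply: leq_trans ij.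
have := @xv_eval (inord i.-1) (inord j.-1) X.
have jn' : (j.-1 < n)%N by rewrite prednK.
have in' : (i.-1 < n)%N by rewrite prednK //; apply: leq_trans ij _.
rewrite !inordK // !prednK // => -> //.
by rewrite -ltnS !prednK.
Qed.

Lemma inordv k : (k < n)%N -> ((inord k : 'I_n) : nat) = k.
Proof. by move=> H; rewrite inordK. Qed.

Lemma gens_vanish l1 l2 : (l1%:M + l2 *: A) \in unitmx ->
  forall c, c \in star_gens C n -> lin_eval c (invmx (l1%:M + l2 *: A)) = 0.
Proof.
move=> Mu.
have nz : forall k, (0 < k < n)%N -> ((inord k : 'I_n) : nat) != 0%N.
  by move=> k /andP [k0 kn]; rewrite inordv // -lt0n.
have ne : forall a b, (a < n)%N -> (b < n)%N -> a != b -> (inord a : 'I_n) != inord b.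
  by move=> a b an bn; apply: contra => /eqP /(congr1 val); rewrite /= !inordv // => ->.
have o0 : (inord 0 : 'I_n) = ord0 by apply: val_inj; rewrite /= inordv.
have [b [g [d [Hb Hg Hd H0 _]]]] := inv_struct Mu.
move: Hb Hg Hd H0; set Y := invmx _ => Hb Hg Hd H0.
move=> c; rewrite !mem_cat => /or4P [].
- case/mapP => i; rewrite mem_iota => /andP [i3 i4] ->.
  rewrite lin_evalB !xv_evaln //=; last by apply: leq_trans i3.
  rewrite (Hg (inord 1)) ?(Hg (inord i.-1)) ?subrr // nz //.
  by rewrite -ltnS prednK //= (leq_trans _ i3).
- case/mapP => p /mapP [j]; rewrite mem_iota => /andP [j2 j3] -> ->.
  rewrite lin_evalB !xv_evaln //= ?(leq_trans _ j2) //.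
  rewrite o0 (Hb (inord 1)) ?(Hb (inord j.-1)) ?subrr // nz //.
  by rewrite -ltnS prednK //= (leq_trans _ j2).
- case/mapP => p /allpairsPdep [i [j [Hi Hj ->]]] ->; move: Hi Hj; rewrite !mem_iota.
  move=> /andP [i2 i3] /andP [j2 j3]; rewrite /= in i3 j3 *.
  have jn : (j <= n)%N by lia.
  rewrite lin_evalB !xv_evaln //=; try lia.
  rewrite (Hd (inord 1) (inord 2)) ?(Hd (inord i.-1) (inord j.-1)) ?subrr // ?nz ?ne //; try lia.
rewrite mem_seq1 => /eqP ->.
rewrite !lin_evalB lin_evalZ !xv_evaln //= o0 H0.
rewrite (Hd (inord m.+1) (inord m.+2)) ?(Hg (inord m.+2)) ?nz ?ne //; try lia.
have -> : (m.+3 - 2)%N = m.+1 by lia.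
by rewrite addrK subrr.
Qed.

Lemma back (c : lf) : c \in <<star_gens C n>>%VS -> in_recip_ideal A c.
Proof.
move=> Hc M [l1 [l2 ->]] Mu.
rewrite (coord_span (X := in_tuple (star_gens C n)) Hc) lin_eval_sum big1 // => i _.
by rewrite lin_evalZ gens_vanish ?mulr0 // mem_nth.
Qed.

Lemma unitt (t : C) : t ^+ 2 = 1 -> (1%:M + t *: A) \in unitmx.
Proof.
move=> t2; rewrite -row_free_unit -kermx_eq0; apply/negPn/negP => /rowV0Pn [v].
move=> /sub_kermxP Hv vn0.
have : eigenvalue A (- t).
  apply/eigenvalueP; exists v => //.
  move: Hv; rewrite mulmxDr mulmx1 -scalemxAr => /eqP; rewrite addr_eq0 => /eqP Ev.
  by rewrite {2}Ev scalerN scaleNr opprK scalerA -expr2 t2 scale1r.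
rewrite eigA oppr_eq0 sqrrN t2 => /orP [t0|].
  by move: t2; rewrite (eqP t0) expr0n /= => /eqP; rewrite eq_sym oner_eq0.
by move/eqP => E; move: (eqr_nat C 1 m.+2); rewrite -E eqxx.
Qed.

Lemma xvE (p q : upair n) : (xv C n (val p).1.+1 (val p).2.+1) q = (q == p)%:R.
Proof.
rewrite ffunE; case: p q => [[i0 j0] /= Hij] [[q1 q2] /= Hq12].
have -> : (exist (fun p : 'I_n * 'I_n => (val p.1 <= val p.2)%N) (q1, q2) Hq12
   == exist _ (i0, j0) Hij) = (((q1:nat) == i0) && ((q2:nat) == j0)).
  apply/eqP/andP => [[-> ->] //| [/eqP E1 /eqP E2]].
  by apply: val_inj; congr pair; apply: val_inj.
rewrite !eqSS; case: (boolP (((q1:nat) == i0) && ((q2:nat) == j0))) => //= H.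
suff : ~~ (((q1:nat) == j0) && ((q2:nat) == i0)) by move/negbTE => ->.
apply/andP => [[/eqP E1 /eqP E2]]; move/negP: H; apply; rewrite -E1 -E2.
have E : (q1 : nat) = q2 by apply/eqP; rewrite eqn_leq Hq12 E1 E2 Hij.
by rewrite E eqxx.
Qed.

Lemma decomp (c : lf) : c = \sum_(p : upair n) c p *: xv C n (val p).1.+1 (val p).2.+1.
Proof.
apply/ffunP => q; rewrite sum_ffunE (bigD1 q) //= big1 ?addr0.
  by rewrite ffunE xvE eqxx /=; apply: esym; exact: mulr1.
by move=> p Hp; rewrite ffunE xvE eq_sym (negbTE Hp); exact: mulr0.
Qed.

Local Notation T3 := [:: xv C n 1 2; xv C n 2 2; xv C n 2 3].
Local Notation T := (star_gens C n ++ T3).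

Lemma xvp_in (p : upair n) : xv C n (val p).1.+1 (val p).2.+1 \in <<T>>%VS.
Proof.
have ing : forall g, g \in star_gens C n -> g \in <<T>>%VS.
  by move=> g Hg; apply: memv_span; rewrite mem_cat Hg.
have int : forall g, g \in T3 -> g \in <<T>>%VS.
  by move=> g Hg; apply: memv_span; rewrite mem_cat Hg orbT.
have sub : forall u w, u \in <<T>>%VS -> u - w \in <<T>>%VS -> w \in <<T>>%VS.
  move=> u w Hu Huw; have -> : w = u - (u - w) by rewrite opprB addrCA subrr addr0.
  exact: memvB.
have g1 : forall i, (3 <= i <= n)%N -> xv C n 2 2 - xv C n i i \in <<T>>%VS.
  move=> i Hi; apply: ing; rewrite /star_gens mem_cat; apply/orP; left.
  apply/mapP; exists i => //; rewrite mem_iota; lia.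
have g2 : forall j, (2 <= j <= n)%N -> xv C n 1 2 - xv C n 1 j \in <<T>>%VS.
  move=> j Hj; apply: ing; rewrite /star_gens !mem_cat; apply/orP; right; apply/orP; left.
  apply/mapP; exists (1%N, j) => //; apply/mapP; exists j => //; rewrite mem_iota; lia.
have g3 : forall i j, (2 <= i)%N -> (i < j <= n)%N -> xv C n 2 3 - xv C n i j \in <<T>>%VS.
  move=> i j Hi Hj; apply: ing; rewrite /star_gens !mem_cat; apply/orP; right; apply/orP; right.
  apply/orP; left; apply/mapP; exists (i, j) => //.
  apply/allpairsPdep; exists i, j; split => //; rewrite mem_iota; lia.
have g4 : xv C n 1 1 - (m.+1)%:R *: xv C n m.+2 m.+3 - xv C n m.+3 m.+3 \in <<T>>%VS.
  apply: ing; rewrite /star_gens !mem_cat; apply/orP; right; apply/orP; right; apply/orP; right.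
  have -> : (m.+3 - 2)%N = m.+1 by lia.
  by rewrite mem_seq1.
case: p => [[i0 j0] H]; change (xv C n i0.+1 j0.+1 \in <<T>>%VS); rewrite /= in H.
have i0n := ltn_ord i0; have j0n := ltn_ord j0.
case: (posnP i0) => [i00|i0p].
  rewrite i00; case: (posnP j0) => [j00|j0p].
    rewrite j00.
    set L := _ - _ - _ in g4.
    have -> : xv C n 1 1 = L + (m.+1)%:R *: xv C n m.+2 m.+3 + xv C n m.+3 m.+3.
      by rewrite /L -[_ - _ - _ + _]addrAC !subrK.
    apply: memvD; [apply: memvD; [exact: g4|] |].
      apply: memvZ; apply: (sub (xv C n 2 3)); [by apply: int; rewrite !inE eqxx !orbT| apply: g3; lia].
    by apply: (sub (xv C n 2 2)); [by apply: int; rewrite !inE eqxx !orbT| apply: g1; lia].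
  by apply: (sub (xv C n 1 2)); [by apply: int; rewrite !inE eqxx| apply: g2; lia].
case: (eqVneq (i0:nat) j0) => [Eij|Nij].
  rewrite -Eij; case: (eqVneq (i0:nat) 1%N) => [->|Ni1].
    by apply: int; rewrite !inE eqxx !orbT.
  by apply: (sub (xv C n 2 2)); [by apply: int; rewrite !inE eqxx !orbT| apply: g1; lia].
move/eqP: Nij => Nij; apply: (sub (xv C n 2 3)); [by apply: int; rewrite !inE eqxx !orbT| apply: g3; lia].
Qed.

Lemma fwd (c : lf) : in_recip_ideal A c -> c \in <<star_gens C n>>%VS.
Proof.
move=> Hc.
have cT : c \in <<T>>%VS.
  by rewrite (decomp c); apply: memv_suml => p _; apply: memvZ; exact: xvp_in.
move: cT; rewrite span_cat => /memv_addP [u Hu [w Hw Ec]].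
have Hw' := coord_span (X := in_tuple T3) Hw.
have o0 : (inord 0 : 'I_n) = ord0 by apply: val_inj; rewrite /= inordv.
set k := coord (in_tuple T3) in Hw'.
pose i0 : 'I_3 := ord0; pose i1 : 'I_3 := lift ord0 ord0; pose i2 : 'I_3 := lift ord0 (lift ord0 ord0).
have Ew : forall X, lin_eval w X = k i0 w * X ord0 (inord 1) + k i1 w * X (inord 1) (inord 1)
    + k i2 w * X (inord 1) (inord 2).
  move=> X; rewrite {1}Hw' lin_eval_sum !big_ord_recl big_ord0 addr0 !lin_evalZ /=.
  by rewrite !xv_evaln //= o0 addrA.
have H : forall M, inL A M -> M \in unitmx -> lin_eval w (invmx M) = 0.
  by move=> M HM Mu; have := Hc M HM Mu; rewrite Ec lin_evalD (back Hu HM Mu) add0r.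
have k1 : k i1 w = 0.
  have := H 1%:M; rewrite invmx1 Ew !mxE -!val_eqE /= !inordv //= mulr0 mulr1 mulr0 add0r addr0.
  apply => //; last exact: unitmx1.
  by exists 1, 0; rewrite scale0r addr0.
have kt : forall t : C, t ^+ 2 = 1 -> k i0 w = k i2 w * t.
  move=> t t2; have Mu := unitt t2.
  have [b [g [d [Hb Hg Hd H0 [R1 R2 R3]]]]] := inv_struct Mu.
  have := H _ (ex_intro _ 1 (ex_intro _ t erefl)) Mu.
  rewrite Ew k1 mul0r addr0 Hb ?inordv // Hd ?inordv //; last first.
    by apply/eqP => /(congr1 val); rewrite /= !inordv.
  have Ed : d = - (t * b) by apply/eqP; rewrite -addr_eq0 addrC -(mul1r d) R3.
  have bn0 : b != 0.
    apply/eqP => b0.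
    have g1 : g = 1 by move: R2; rewrite b0 mulr0 add0r mul1r.
    have d0 : d = 0 by move: R3; rewrite b0 mulr0 add0r mul1r.
    move: R1; rewrite b0 mulr0 addr0 H0 g1 d0 mulr0 addr0 mulr1 => t0.
    by move: t2; rewrite t0 expr0n /= => /eqP; rewrite eq_sym oner_eq0.
  rewrite Ed mulrN mulrA => /eqP; rewrite subr_eq0 => /eqP.
  by move/(mulIf bn0) ->; rewrite mulrC.
have k2 : k i2 w = 0.
  have := kt 1 (expr1n _ _); have := kt (-1) ltac:(by rewrite sqrrN expr1n).
  rewrite mulr1 mulrN1 => -> /eqP; rewrite eq_sym -addr_eq0 -mulr2n mulrn_eq0 /=.
  by move/eqP.
have k0 : k i0 w = 0 by rewrite (kt 1 (expr1n _ _)) k2 mul0r.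
have w0 : w = 0.
  by rewrite {1}Hw' !big_ord_recl big_ord0 /= -/k k0 k1 k2 !scale0r !addr0.
by rewrite Ec w0 addr0.
Qed.
End S.

Section O.
Variable m : nat.
Local Notation n := m.+3.
Local Notation e := (star_rel n).
Local Notation o1 := (lift ord0 (ord0 : 'I_m.+2)).
Local Notation o2 := (lift ord0 (lift ord0 (ord0 : 'I_m.+1))).

Lemma autGE (s : {perm 'I_n}) : (s \in autG e) = (s ord0 == ord0).
Proof.
apply/idP/idP.
  rewrite inE => /forallP H; apply/eqP/val_inj => /=; apply/eqP; apply: contraT => s0.
  have E : forall j : 'I_n, (j:nat) != 0%N -> (s j : nat) == 0%N.
    move=> j j0; have /forallP /(_ j) /eqP := H ord0.
    rewrite /star_rel /= j0 (negbTE s0) /=.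
    by rewrite andbT.
  have := E o1 isT; have := E o2 isT => /eqP E2 /eqP E1.
  have : s o1 = s o2 by apply: val_inj; rewrite /= E1 E2.
  by move/perm_inj.
move/eqP => s0.
have Hs : forall i, ((s i : nat) == 0%N) = ((i : nat) == 0%N).
  move=> i; apply/eqP/eqP => [E|E].
    have : s i = s ord0 by rewrite s0; apply: val_inj.
    by move/perm_inj => ->.
  have -> : i = ord0 by apply: val_inj.
  by rewrite s0.
rewrite inE; apply/forallP => i; apply/forallP => j; by rewrite /star_rel !Hs.
Qed.

Lemma orbit_step (t : {perm 'I_n}) (S : {set 'I_n}) : t \in autG e ->
  pair_orbit e (t @: S) = pair_orbit e S.
Proof.
move=> Ht; rewrite autGE in Ht.
apply/setP => X; apply/imsetP/imsetP => [[s Hs ->]|[s Hs ->]].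
  exists (t * s)%g; first by rewrite autGE permM (eqP Ht) -autGE.
  by rewrite -imset_comp; apply: eq_imset => x; rewrite /= permM.
exists (t^-1 * s)%g.
  rewrite autGE permM; have -> : t^-1%g ord0 = ord0.
    by rewrite -{1}(eqP Ht) permK.
  by rewrite -autGE.
by rewrite -imset_comp; apply: eq_imset => x; rewrite /= permM permK.
Qed.

Lemma orbit_ty (S X : {set 'I_n}) : X \in pair_orbit e S -> (ord0 \in X) = (ord0 \in S) /\ #|X| = #|S|.
Proof.
case/imsetP => s; rewrite autGE => /eqP s0 ->; split.
  by rewrite -{1}s0 (mem_imset _ _ (@perm_inj _ s)).
by rewrite card_imset //; exact: perm_inj.
Qed.

Lemma orbit_self (S : {set 'I_n}) : S \in pair_orbit e S.
Proof.
apply/imsetP; exists 1%g; first by rewrite autGE perm1.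
by apply/setP => x; apply/idP/imsetP => [Hx|[y Hy ->]]; [exists x; rewrite ?perm1 | rewrite perm1].
Qed.

Definition rep (k : 'I_4) : {set 'I_n} :=
  match val k with 0 => [set ord0] | 1 => [set o1] | 2 => [set ord0; o1] | _ => [set o1; o2] end.

Lemma tp_aut (a b : 'I_n) : (a:nat) != 0%N -> (b:nat) != 0%N -> tperm a b \in autG e.
Proof.
move=> a0 b0; rewrite autGE tpermD //.
Qed.

Lemma rep_ty (k : 'I_4) : (ord0 \in rep k) = ((k:nat) == 0%N) || ((k:nat) == 2%N)
  /\ #|rep k| = if (k < 2)%N then 1%N else 2%N.
Proof.
case: k => [[|[|[|[|k]]]] Hk] //; rewrite /rep /= ?cards1 ?cards2 ?inE //.
Qed.

Lemma num_orbits : num_pair_orbits e = 4%N.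
Proof.
rewrite /num_pair_orbits.
have -> : [set pair_orbit e S | S in upairs n] = [set pair_orbit e (rep k) | k : 'I_4].
  apply/setP => O; apply/imsetP/imsetP => [[S HS ->]|[k _ ->]]; last first.
    exists (rep k) => //; rewrite inE; have [_ ->] := rep_ty k; by case: ifP.
  move: HS; rewrite inE => /andP [S1 S2].
  have o1n : (o1 : nat) != 0%N by [].
  have o2n : (o2 : nat) != 0%N by [].
  have fix0 : forall t : {perm 'I_n}, t \in autG e -> forall z : 'I_n, (z:nat) != 0%N -> (t z : nat) != 0%N.
    move=> t; rewrite autGE => /eqP t0 z; apply: contra => /eqP tz.
    have : t z = t ord0 by rewrite t0; apply: val_inj.
    by move/perm_inj => ->.
  have [/cards1P [x ->]|/cards2P [x [y [xy ->]]]] : #|S| == 1%N \/ #|S| == 2%N by lia.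
    case: (eqVneq (x:nat) 0%N) => [x0|x0].
      exists (@Ordinal 4 0 isT) => //; rewrite /rep /=.
      by have -> : x = ord0 by apply: val_inj.
    exists (@Ordinal 4 1 isT) => //; rewrite /rep /=.
    by rewrite -(orbit_step _ (tp_aut x0 o1n)) imset_set1 tpermL.
  have pairE : forall t : {perm 'I_n}, t @: [set x; y] = [set t x; t y].
    by move=> t; rewrite imsetU1 imset_set1.
  have Hr2 : forall z : 'I_n, (z:nat) != 0%N -> pair_orbit e [set ord0; z] = pair_orbit e (rep (@Ordinal 4 2 isT)).
    move=> z z0; rewrite /rep /= -(orbit_step _ (tp_aut z0 o1n)) imsetU1 imset_set1 tpermL tpermD //.
  case: (eqVneq (x:nat) 0%N) => [x0|x0].
    have -> : x = ord0 by apply: val_inj.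
    exists (@Ordinal 4 2 isT) => //; apply: Hr2; apply: contra xy => /eqP y0.
    by apply/eqP; apply: val_inj; rewrite /= x0 y0.
  case: (eqVneq (y:nat) 0%N) => [y0|y0].
    have -> : y = ord0 by apply: val_inj.
    by exists (@Ordinal 4 2 isT) => //; rewrite setUC; apply: Hr2.
  exists (@Ordinal 4 3 isT) => //; rewrite /rep /=.
  have A1 := tp_aut x0 o1n.
  rewrite -(orbit_step _ A1) pairE tpermL.
  set y' := tperm x o1 y.
  have y'0 : (y' : nat) != 0%N by apply: fix0.
  have y'1 : y' != o1 by rewrite /y' -{2}(tpermL x o1); apply: contra xy => /eqP /perm_inj ->.
  rewrite -(orbit_step _ (tp_aut y'0 o2n)) imsetU1 imset_set1 tpermL tpermD //.
rewrite card_imset ?card_ord // => a b Hab.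
have := orbit_self (rep a); rewrite Hab => /orbit_ty [].
have [-> ->] := rep_ty a; have [-> ->] := rep_ty b.
move: a b {Hab} => [[|[|[|[|a]]]] Ha] [[|[|[|[|b]]]] Hb] //=; try lia;
  by move=> *; apply: val_inj.
Qed.
End O.

Unset Implicit Arguments.

Theorem mainTheorem7 (C : numClosedFieldType) (n : nat) (hn : (3 <= n)%N) :
  num_distinct_eigs (adj_mx C (star_rel n)) 3
  /\ num_pair_orbits (star_rel n) = 4%N
  /\ (forall c : linform C n,
        in_recip_ideal (adj_mx C (star_rel n)) c <-> c \in <<star_gens C n>>%VS).
Proof.
move: hn; case: n => [|[|[|m]]] // _.
split; first exact: part1.
split; first exact: num_orbits.
by move=> c; split; [exact: fwd | exact: back].
Qed.
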